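(* Let $d$ and $k$ be positive integers with $k\le d$, and let $C_m=\frac{1}{m+1}\binom{2m}{m}$ denote the $m$-th Catalan number. Then $$\sum_{\mathcal P}C_{a_1-1}C_{a_2-1}\cdots C_{a_k-1}=\binom{2d-k-1}{d-1},$$ where the sum is over all cyclic compositions $\mathcal P$ of $d$ into $k$ parts and $a_1,\dots,a_k$ are the sizes of the parts of $\mathcal P$.
   Context: For $d\ge1$ consider the cycle graph with vertex set $\mathbb Z_d$ and the $d$ edges $\{i,i+1\}$, $i\in\mathbb Z_d$ (a loop if $d=1$, two parallel edges if $d=2$). A cyclic composition of $d$ into $k$ parts ($1\le k\le d$) is a choice of a $k$-element subset of the $d$ edges of the cycle to delete; its parts are the $k$ connected components (each a path) of the remaining graph, and the size of a part is its number of vertices. There are $\binom dk$ cyclic compositions of $d$ into $k$ parts. *)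

(* Defs.v *)
From mathcomp Require Import all_boot.
Set Implicit Arguments. Unset Strict Implicit. Unset Printing Implicit Defensive.

Definition catalan (m : nat) : nat := 'C(m.*2, m) %/ m.+1.

(* Cycle graph on Z_d (vertices 'I_d); edge i (i : 'I_d) joins i and i+1 mod d.
   For d = 1 edge 0 is a loop; for d = 2 edges 0 and 1 are parallel.
   [cyc_adj S x y] : x and y are joined by an edge of the cycle not in S
   (S = set of deleted edges). *)
Definition cyc_adj (d : nat) (S : {set 'I_d}) : rel 'I_d :=
  fun x y => ((val y == x.+1 %% d) && (x \notin S))
          || ((val x == y.+1 %% d) && (y \notin S)).

Definition cyc_parts (d : nat) (S : {set 'I_d}) : {set {set 'I_d}} :=
  [set [set y | connect (cyc_adj S) x y] | x : 'I_d].

(* Main.v *)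
Require Import Defs.
From mathcomp Require Import all_boot zify.
Set Implicit Arguments. Unset Strict Implicit. Unset Printing Implicit Defensive.

Fixpoint Q (n j : nat) : nat :=
  match n, j with
  | 0, 0 => 1
  | 0, _ => 0
  | n'.+1, 0 => 0
  | n'.+1, j'.+1 => Q n' j'.+2 + Q n' j'
  end.

Lemma Q0j j : Q 0 j = (j == 0). Proof. by case: j. Qed.
Lemma Qn0 n : Q n 0 = (n == 0). Proof. by case: n. Qed.
Lemma QSS n j : Q n.+1 j.+1 = Q n j.+2 + Q n j. Proof. by []. Qed.

Lemma Q_small n j : n < j -> Q n j = 0.
Proof.
elim: n j => [|n IH] [|j] //= h.
rewrite !IH //; lia.
Qed.

Lemma Q_diag n : Q n n = 1.
Proof. elim: n => [|n IH] //=; rewrite IH Q_small //. Qed.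

Lemma Q_par n j : odd (n + j) -> Q n j = 0.
Proof.
elim: n j => [|n IH] [|j] //= h.
rewrite !IH //.
  + by move: h; rewrite !addnS /= ?negbK.
  + by move: h; rewrite !addnS /= ?negbK.
Qed.

Lemma Q_conv n j : Q n j.+1 = \sum_(a < n.+1) Q a 1 * Q (n - a) j.
Proof.
elim: n j => [|n IH] j.
  by rewrite big_ord1.
rewrite big_ord_recr /= subnn Q0j.
case: j => [|j].
  rewrite muln1 big1 ?add0n // => i _.
  by rewrite subSn ?Qn0 ?muln0 //; rewrite -ltnS.
rewrite muln0 addn0 (IH j.+2) (IH j) -big_split /=.
apply: eq_bigr => i _; rewrite subSn; last by rewrite -ltnS.
by rewrite QSS mulnDr.
Qed.

Lemma Q_closed_aux n : forall d k, 0 < k -> k <= d -> d.*2 - k = n ->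
  Q n k + 'C(n.-1, d) = 'C(n.-1, d.-1).
Proof.
elim: n => [|n IH] d k hk hkd hn; first lia.
have [ekd|ltkd] := eqVneq k d.
  subst k; have ed : d = n.+1 by lia.
  by subst d; rewrite Q_diag bin_small // binn.
have ltkd' : k < d by rewrite ltn_neqAle ltkd hkd.
case: k hk hkd hn ltkd ltkd' => [//|j] _ hkd hn _ ltkd.
have A := IH d j.+2 erefl ltkd ltac:(lia).
case: d hkd hn ltkd A => [|[|d2]] hkd hn ltkd A; try lia.
case: n IH hn A => [|n1] IH hn A; first lia.
rewrite QSS !succnK binS binS.
rewrite !succnK in A.
case: j hkd hn ltkd A => [|j1] hkd hn ltkd A.
  rewrite Qn0 addn0.
  have -> : 'C(n1, d2) = 'C(n1, d2.+1).
    by rewrite -bin_sub; [congr 'C(_, _); lia | lia].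
  lia.
have B := IH d2.+1 j1.+1 erefl ltac:(lia) ltac:(lia).
rewrite !succnK in B. lia.
Qed.

Lemma Q_closed d k : 0 < k -> k <= d ->
  Q (d.*2 - k) k + 'C((d.*2 - k).-1, d) = 'C((d.*2 - k).-1, d.-1).
Proof. by move=> hk hkd; apply: Q_closed_aux. Qed.

Lemma Q_mul d k : 0 < k -> k <= d ->
  d * Q (d.*2 - k) k = k * 'C((d.*2 - k).-1, d.-1).
Proof.
move=> hk hkd; have := Q_closed hk hkd.
case: d hkd => [|d] hkd; first lia.
have := mul_bin_left ((d.+1).*2 - k).-1 d.
rewrite /= => E1 E2.
have E3 : ((d.+1).*2 - k).-1 - d = d.+1 - k by lia.
rewrite E3 in E1.
nia.
Qed.

Lemma catalanQ a : catalan a = Q a.*2.+1 1.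
Proof.
have := Q_mul (d := a.+1) (k := 1) erefl erefl.
have -> : (a.+1).*2 - 1 = a.*2.+1 by lia.
rewrite /= mul1n /catalan => <-.
by rewrite mulKn.
Qed.

Definition f (n : nat) := catalan n.-1.

Fixpoint lw (c : nat) (m : seq bool) : nat :=
  match m with
  | [::] => (c == 0 : nat)
  | true :: m' => f c.+1 * lw 0 m'
  | false :: m' => lw c.+1 m'
  end.

Fixpoint allbits n : seq (seq bool) :=
  if n is n'.+1 then [seq false :: s | s <- allbits n'] ++ [seq true :: s | s <- allbits n']
  else [:: [::]].

Definition G n k c := \sum_(m <- allbits n | count id m == k) lw c m.

Lemma G0 k c : G 0 k c = (k == 0) * (c == 0).
Proof. by rewrite /G /= big_cons big_nil; case: k. Qed.

Lemma GS n k c : G n.+1 k c =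
  G n k c.+1 + (if k is k'.+1 then f c.+1 * G n k' 0 else 0).
Proof.
rewrite /G /= big_cat !big_map /=; congr (_ + _).
case: k => [|k].
  by rewrite big1.
by rewrite big_distrr /=.
Qed.

Lemma Gbig n k c : n < k -> G n k c = 0.
Proof.
elim: n k c => [|n IH] k c h; first by rewrite G0; case: k h.
rewrite GS IH; last lia.
case: k h => [//|k] h; rewrite IH ?muln0 //; lia.
Qed.

Lemma Gk0 n c : G n 0 c = ((n == 0) && (c == 0)).
Proof.
elim: n c => [|n IH] c; first by rewrite G0; case: c.
by rewrite GS IH addn0 /= andbF.
Qed.

Lemma Gconv n k c : G n k.+1 c = \sum_(a < n) f (c + a).+1 * G (n - a.+1) k 0.
Proof.
elim: n c => [|n IH] c; first by rewrite G0 big_ord0.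
rewrite GS IH big_ord_recl /= addn0 subSS subn0 addnC; congr (_ + _).
apply: eq_bigr => i _; by rewrite addSnnS.
Qed.

Lemma sum_pairs (F : nat -> nat) n :
  \sum_(b < n.*2) F b = \sum_(a < n) (F a.*2 + F a.*2.+1).
Proof.
elim: n => [|n IH]; first by rewrite !big_ord0.
by rewrite doubleS !big_ord_recr /= IH addnA.
Qed.

Lemma GQ n k : G n k 0 = Q (n.*2 - k) k.
Proof.
elim: k n => [|k IH] n.
  by rewrite Gk0 subn0 Qn0 double_eq0 andbT.
have [lt|ge] := ltnP n k.+1.
  by rewrite Gbig // Q_small //; lia.
set N := n.*2 - k.+1.
have eN : N.+1 = n.*2 - k by rewrite /N; lia.
rewrite Gconv Q_conv (@big_ord_widen nat 0 addn N.+1 n.*2 (fun b => Q b 1 * Q (N - b) k) (_ : N.+1 <= n.*2)); last lia.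
rewrite [RHS]big_mkcond (sum_pairs (fun b => if b < N.+1 then Q b 1 * Q (N - b) k else 0)).
apply: eq_bigr => a _.
rewrite /f add0n succnK IH catalanQ (@Q_par a.*2 1); last by rewrite addn1 /= odd_double.
rewrite mul0n if_same add0n.
case: ifP => hlt.
  congr (_ * Q _ _); lia.
rewrite (@Q_small ((n - a.+1).*2 - k) k) ?muln0 //.
move/negbT: hlt; rewrite -leqNgt eN.
have := ltn_ord a.
case: (k) => [|k']; lia.
Qed.

Definition bitsS d (S : {set 'I_d}) : seq bool := [seq i \in S | i <- enum 'I_d].

Lemma size_bitsS d (S : {set 'I_d}) : size (bitsS S) = d.
Proof. by rewrite size_map size_enum_ord. Qed.

Lemma nth_bitsS d (S : {set 'I_d}) (i : 'I_d) : nth false (bitsS S) i = (i \in S).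
Proof.
by rewrite (nth_map i) ?nth_ord_enum // size_enum_ord.
Qed.

Lemma count_bitsS d (S : {set 'I_d}) : count id (bitsS S) = #|S|.
Proof.
rewrite count_map cardE /enum_mem size_filter count_filter.
by apply: eq_count => x /=; rewrite andbT.
Qed.

Lemma consb_inj (b : bool) : injective (cons b).
Proof. by move=> x y []. Qed.

Lemma mem_allbits n m : (m \in allbits n) = (size m == n).
Proof.
elim: n m => [|n IH] m; first by case: m => [|? []].
case: m => [|b m].
  by rewrite /= mem_cat; apply/negbTE/orP => -[] /mapP[].
rewrite /= mem_cat eqSS -IH.
case: b.
  rewrite (mem_map (@consb_inj true)).
  suff -> : (true :: m \in [seq false :: s | s <- allbits n]) = false by [].
  by apply/negbTE/mapP => -[].
rewrite (mem_map (@consb_inj false)).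
suff -> : (false :: m \in [seq true :: s | s <- allbits n]) = false by rewrite orbF.
by apply/negbTE/mapP => -[].
Qed.

Lemma uniq_allbits n : uniq (allbits n).
Proof.
elim: n => [|n IH] //=.
rewrite cat_uniq !map_inj_uniq ?IH //=; try by move=> x y [].
rewrite andbT; apply/hasP => -[x /mapP[y _ ->] /mapP[z _]].
by [].
Qed.

Lemma sum_allbits d (F : seq bool -> nat) :
  \sum_(S : {set 'I_d}) F (bitsS S) = \sum_(m <- allbits d) F m.
Proof.
rewrite -(big_map (@bitsS d) xpredT F).
apply: perm_big; apply: uniq_perm.
- rewrite map_inj_uniq ?index_enum_uniq // => S T e.
  apply/setP => i; by rewrite -!nth_bitsS e.
- exact: uniq_allbits.
move=> m; rewrite mem_allbits; apply/idP/idP.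
  by case/mapP => S _ ->; rewrite size_bitsS.
move/eqP => hs; apply/mapP; exists [set i : 'I_d | nth false m i]; first by rewrite mem_index_enum.
apply: (@eq_from_nth _ false); first by rewrite size_bitsS.
move=> i; rewrite hs => hi.
by rewrite (nth_bitsS _ (Ordinal hi)) inE.
Qed.

Lemma sum_setsG d k :
  \sum_(S : {set 'I_d} | #|S| == k) lw 0 (bitsS S) = G d k 0.
Proof.
rewrite big_mkcond /= /G [RHS]big_mkcond /=.
have E := sum_allbits d (fun m => if count id m == k then lw 0 m else 0).
cbv beta in E; rewrite -E.
by apply: eq_bigr => S _; rewrite count_bitsS.
Qed.

Definition pT (m : seq bool) (i : nat) := \max_(j < i | nth false m j) j.+1.

Lemma maxn_eq0' m n : (maxn m n == 0) = (m == 0) && (n == 0).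
Proof. case: m => [|m]; case: n => [|n] //; rewrite /maxn; by case: ifP. Qed.

Lemma max_shift (P : nat -> bool) i :
  \max_(j < i) (if P j then j.+2 else 0) =
  (if \max_(j < i) (if P j then j.+1 else 0) == 0 then 0
   else (\max_(j < i) (if P j then j.+1 else 0)).+1).
Proof.
elim: i => [|i IH]; first by rewrite !big_ord0.
rewrite !big_ord_recr /= IH.
move: (\max_(j < i) (if P j then j.+1 else 0)) => X.
case: (P i) => /=; rewrite maxn_eq0' ?andbF ?andbT; case: X => [|X] /=; lia.
Qed.

Lemma pT0 m : pT m 0 = 0.
Proof. by rewrite /pT big_ord0. Qed.

Lemma pTcons b m j : pT (b :: m) j.+1 =
  if b then (pT m j).+1 else (if pT m j == 0 then 0 else (pT m j).+1).
Proof.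
rewrite /pT [in RHS]big_mkcond [in LHS]big_mkcond big_ord_recl /=.
have -> : \max_(i < j) (if nth false (b :: m) (lift ord0 i) then (lift ord0 i).+1 else 0)
  = \max_(i < j) (if nth false m i then i.+2 else 0).
  by apply: eq_bigr => i _; rewrite lift0.
rewrite (max_shift (fun i => nth false m i)).
move: (\max_(i < j) (if nth false m i then i.+1 else 0)) => X.
by case: b; case: X => [|X] /=; lia.
Qed.

Lemma lw_prod m c : last false m ->
  lw c m = \prod_(i < size m | nth false m i)
             f (i.+1 + (if pT m i == 0 then c else 0) - pT m i).
Proof.
elim: m c => [//|b m IH] c.
case: m IH => [|b' m'] IH.
  move=> /= hb; rewrite hb big_mkcond big_ord1 /= pT0 /=.
  by rewrite muln1 subn0 add1n.
move=> hl.
have hl' : last false (b' :: m') by [].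
move: (b' :: m') IH hl' hl => m IH hl' hl.
rewrite big_mkcond big_ord_recl.
have -> : nth false (b :: m) (@ord0 (size m)) = b by [].
rewrite pT0 add1n subn0.
case: b hl => hl.
  change (lw c (true :: m)) with (f c.+1 * lw 0 m).
  rewrite (IH 0 hl') big_mkcond; congr (_ * _).
  apply: eq_bigr => i _; rewrite lift0 pTcons.
  change (nth false (true :: m) i.+1) with (nth false m i).
  case: ifP => // _; congr f; case: (pT m i) => [|x]; [rewrite eqxx (_ : (1 == 0) = false) //; lia | rewrite (_ : (x.+1 == 0) = false) // (_ : (x.+2 == 0) = false) //; lia].
change (lw c (false :: m)) with (lw c.+1 m).
rewrite Monoid.mul1m (IH c.+1 hl') big_mkcond.
apply: eq_bigr => i _; rewrite lift0 pTcons.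
change (nth false (false :: m) i.+1) with (nth false m i).
case: ifP => // _; congr f; case: (pT m i) => [|x]; [rewrite eqxx; move: (nat_of_ord i) => j; lia | rewrite (_ : (x.+1 == 0) = false) // (_ : (x.+2 == 0) = false) //; lia].
Qed.

Ltac mylia := repeat match goal with H : context [size ?s] |- _ => revert H end;
  repeat match goal with |- context [size ?s] => let k := fresh "sz" in move: (size s) => k end;
  intros; lia.

Definition blk (m : seq bool) (y : nat) := y + find id (drop y m).

Section Blk.
Variable m : seq bool.
Hypothesis hl : last false m.

Lemma has_after y : y < size m -> has id (drop y m).
Proof.
move=> hy; apply/hasP; exists (nth false (drop y m) ((size m).-1 - y)).
  by apply: mem_nth; rewrite size_drop; mylia.
rewrite nth_drop (_ : y + ((size m).-1 - y) = (size m).-1); last mylia.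
by rewrite nth_last.
Qed.

Lemma blk_lt y : y < size m -> blk m y < size m.
Proof.
move=> hy; have := has_after hy; rewrite has_find size_drop /blk; mylia.
Qed.

Lemma blk_true y : y < size m -> nth false m (blk m y).
Proof.
move=> hy; have := nth_find false (has_after hy).
by rewrite nth_drop.
Qed.

Lemma blk_before y j : y <= j -> j < blk m y -> nth false m j = false.
Proof.
move=> h1 h2; have := @before_find _ false id (drop y m) (j - y).
rewrite nth_drop (_ : y + (j - y) = j); last mylia.
by apply; rewrite /blk in h2; mylia.
Qed.

Lemma blk_step x : x < size m -> nth false m x = false -> blk m x = blk m x.+1.
Proof.
move=> hx hn; rewrite /blk (drop_nth false hx) hn /=; mylia.
Qed.

Lemma notlast x : x < size m -> nth false m x = false -> x.+1 < size m.
Proof.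
move=> hx hn; rewrite ltn_neqAle hx andbT; apply/eqP => e.
have : nth false m (size m).-1 = false by rewrite -e.
by rewrite nth_last => h; move: hl; rewrite h.
Qed.

Lemma blk_eqP y e : y < size m -> nth false m e ->
  (blk m y == e) = (pT m e <= y <= e).
Proof.
move=> hy he; apply/eqP/idP.
  move=> <-; apply/andP; split; last by rewrite /blk leq_addr.
  apply/bigmax_leqP => j hj; rewrite ltnNge; apply/negP => hyj.
  by rewrite (blk_before hyj (ltn_ord j)) in hj.
case/andP => h1 h2; apply/eqP; rewrite eqn_leq; apply/andP; split.
  rewrite leqNgt; apply/negP => h3.
  by rewrite (blk_before h2 h3) in he.
rewrite leqNgt; apply/negP => h3.
have := @leq_bigmax_cond _ (fun j : 'I_e => nth false m j) (fun j : 'I_e => j.+1)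
   (Ordinal h3) (blk_true hy).
rewrite -/(pT m e) /=; rewrite /blk in h2 h3 *; mylia.
Qed.

End Blk.

Lemma card_itv d a b : b < d -> #|[set y : 'I_d | a <= y <= b]| = b.+1 - a.
Proof.
move=> hb; rewrite -sum1_card big_mkcond /=.
rewrite (eq_bigr (fun i : 'I_d => nat_of_bool (a <= i <= b))); last first.
  by move=> i _; rewrite inE; case: (_ && _).
rewrite -(big_mkord xpredT (fun i => nat_of_bool (a <= i <= b))).
suff -> : forall n, \sum_(0 <= i < n) (a <= i <= b : nat) = minn n b.+1 - a by lia.
elim => [|n IH]; first by rewrite big_geq.
rewrite big_nat_recr //= IH.
case: (leqP a n) => h1; case: (leqP n b) => h2 /=; lia.
Qed.

Section Parts.
Variable d : nat.
Variable S : {set 'I_d}.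
Hypothesis hl : last false (bitsS S).
Local Notation m := (bitsS S).

Lemma sizem : size m = d. Proof. exact: size_bitsS. Qed.

Lemma adj_blk (x y : 'I_d) : cyc_adj S x y -> blk m x = blk m y.
Proof.
have H : forall x y : 'I_d, val y = x.+1 %% d -> x \notin S -> blk m x = blk m y.
  move=> u v ev hu.
  have hn : nth false m u = false by rewrite nth_bitsS; apply/negbTE.
  have hu' : u < size m by rewrite sizem.
  have hs := notlast hl hu' hn; rewrite sizem in hs.
  by rewrite ev modn_small // (blk_step hl hu' hn).
by case/orP => /andP[/eqP e h]; [apply: H | symmetry; apply: H].
Qed.

Lemma connect_blk (x y : 'I_d) : connect (cyc_adj S) x y -> blk m x = blk m y.
Proof.
case/connectP => p; elim: p x => [|z p IH] x /=; first by move=> _ ->.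
by case/andP => /adj_blk -> hp hy; apply: IH.
Qed.

Lemma adj_sym : symmetric (cyc_adj S).
Proof. by move=> x y; rewrite /cyc_adj orbC. Qed.

Lemma blk_connect (x y : 'I_d) : blk m x = blk m y -> connect (cyc_adj S) x y.
Proof.
wlog le : x y / x <= y.
  move=> W; case: (leqP x y) => h e; first exact: W.
  rewrite (sym_connect_sym adj_sym); apply: W; [exact: ltnW | by []].
move: {2}(y - x) (erefl (y - x)) => t; elim: t x le => [|t IH] x le et e.
  have -> : x = y by apply: val_inj; rewrite /=; lia.
  exact: connect0.
have hx : x < size m by rewrite sizem.
have hn : nth false m x = false.
  apply: (blk_before hl (y := x)) => //.
  rewrite e; apply: (leq_trans _ (leq_addr _ _)); lia.
have hx1 : x.+1 < d by have := ltn_ord y; lia.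
pose x' := Ordinal hx1.
apply: (connect_trans (y := x')).
  apply: connect1; apply/orP; left; rewrite modn_small // eqxx /=.
  by rewrite -nth_bitsS hn.
apply: IH => /=; [lia | lia |].
by rewrite -(blk_step hl hx hn).
Qed.

Lemma comp_eq (x : 'I_d) :
  [set y | connect (cyc_adj S) x y] = [set y : 'I_d | blk m y == blk m x].
Proof.
apply/setP => y; rewrite !inE; apply/idP/eqP => h.
  by rewrite (connect_blk h).
by apply: blk_connect.
Qed.

Definition Fb (e : 'I_d) : {set 'I_d} := [set y : 'I_d | blk m y == e].

Lemma blk_id (e : 'I_d) : e \in S -> blk m e = e.
Proof.
move=> he; apply/eqP; rewrite (blk_eqP hl) //; last by rewrite nth_bitsS.
  rewrite leqnn andbT.
  apply/bigmax_leqP => j _; done.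
by rewrite sizem.
Qed.

Lemma parts_eq : cyc_parts S = Fb @: S.
Proof.
apply/setP => P; apply/imsetP/imsetP => -[x hx ->].
  have hx' : x < size m by rewrite sizem.
  have hb := blk_lt hl hx'; rewrite sizem in hb.
  exists (Ordinal hb).
    by rewrite -nth_bitsS /=; apply: blk_true.
  by rewrite comp_eq /Fb.
by exists x => //; rewrite comp_eq /Fb blk_id.
Qed.

Lemma Fb_inj : {in S &, injective Fb}.
Proof.
move=> e1 e2 h1 h2 E.
have : e1 \in Fb e1 by rewrite inE blk_id.
by rewrite E inE blk_id // => /eqP/val_inj.
Qed.

Lemma card_Fb e : e \in S -> #|Fb e| = e.+1 - pT m e.
Proof.
move=> he; rewrite -(card_itv (pT m e) (ltn_ord e)).
apply: eq_card => y; rewrite !inE (blk_eqP hl) //; first by rewrite sizem.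
by rewrite nth_bitsS.
Qed.

Lemma w_lw : \prod_(P in cyc_parts S) catalan (#|P|.-1) = lw 0 m.
Proof.
rewrite parts_eq big_imset; last exact: Fb_inj.
rewrite (lw_prod 0 hl).
rewrite -(big_mkord (fun i => nth false m i)
   (fun i => f (i.+1 + (if pT m i == 0 then 0 else 0) - pT m i))) sizem big_mkord.
apply: eq_big => [i|i hi]; first by rewrite nth_bitsS.
by rewrite card_Fb // if_same addn0.
Qed.
End Parts.

Lemma connect_map (T : finType) (e e' : rel T) (h : T -> T) :
  (forall x y, e x y -> e' (h x) (h y)) ->
  forall x y, connect e x y -> connect e' (h x) (h y).
Proof.
move=> H x y /connectP[p hp ->]; elim: p x hp => [|z p IH] x /=.
  by move=> _; exact: connect0.
case/andP => exz hp; exact: connect_trans (connect1 (H _ _ exz)) (IH _ hp).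
Qed.

Section Rot.
Variable n : nat.
Local Notation d := n.+1.

Definition rot (r : nat) (x : 'I_d) : 'I_d := Ordinal (ltn_pmod (x + r) (ltn0Sn n)).

Lemma rotK r : r <= d -> cancel (rot r) (rot (d - r)).
Proof.
move=> hr x; apply: val_inj => /=.
rewrite modnDml (_ : x + r + (d - r) = x + d); last lia.
by rewrite modnDr modn_small.
Qed.

Lemma rotK' r : r <= d -> cancel (rot (d - r)) (rot r).
Proof.
move=> hr x; apply: val_inj => /=.
rewrite modnDml (_ : x + (d - r) + r = x + d); last lia.
by rewrite modnDr modn_small.
Qed.

Lemma rot_inj r : r <= d -> injective (rot r).
Proof. by move=> hr; apply: can_inj (rotK hr). Qed.

Lemma rot_adj r (S : {set 'I_d}) x y : r <= d ->
  cyc_adj (rot r @: S) (rot r x) (rot r y) = cyc_adj S x y.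
Proof.
move=> hr; rewrite /cyc_adj !mem_imset; try exact: rot_inj.
have E : forall u v : 'I_d, (val (rot r v) == (rot r u).+1 %% d) = (val v == u.+1 %% d).
  move=> u v /=.
  rewrite -(addn1 ((u + r) %% d)) modnDml (_ : u + r + 1 = u.+1 + r); last lia.
  by rewrite eqn_modDr (modn_small (ltn_ord v)).
by rewrite !E.
Qed.

Lemma rot_connect r (S : {set 'I_d}) x y : r <= d ->
  connect (cyc_adj (rot r @: S)) (rot r x) (rot r y) = connect (cyc_adj S) x y.
Proof.
move=> hr; apply/idP/idP.
  move/(connect_map (h := rot (d - r)) (e' := cyc_adj S)); rewrite !rotK //.
  apply=> u v; rewrite -{1}(rotK' hr u) -{1}(rotK' hr v) rot_adj //.
apply: connect_map => u v; by rewrite rot_adj.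
Qed.

Lemma comp_rot r (S : {set 'I_d}) x : r <= d ->
  [set y | connect (cyc_adj (rot r @: S)) (rot r x) y] =
  rot r @: [set y | connect (cyc_adj S) x y].
Proof.
move=> hr; apply/setP => y.
have ey : y = rot r (rot (d - r) y) by rewrite rotK'.
rewrite [in RHS]ey mem_imset; last exact: rot_inj hr.
by rewrite !inE [in LHS]ey rot_connect.
Qed.

Lemma parts_rot r (S : {set 'I_d}) : r <= d ->
  cyc_parts (rot r @: S) = (fun P : {set 'I_d} => rot r @: P) @: cyc_parts S.
Proof.
move=> hr; apply/setP => Q; apply/imsetP/imsetP.
  case=> x' _ ->.
  exists [set y | connect (cyc_adj S) (rot (d - r) x') y].
    by apply/imsetP; exists (rot (d - r) x').
  by rewrite -comp_rot // rotK'.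
case=> P /imsetP[x _ ->] ->.
by exists (rot r x) => //; rewrite comp_rot.
Qed.

Definition W (S : {set 'I_d}) := \prod_(P in cyc_parts S) catalan (#|P|.-1).

Lemma W_rot r (S : {set 'I_d}) : r <= d -> W (rot r @: S) = W S.
Proof.
move=> hr; rewrite /W parts_rot // big_imset.
  by apply: eq_bigr => P _; rewrite card_imset //; exact: rot_inj.
by move=> P1 P2 _ _; apply: imset_inj; exact: rot_inj.
Qed.

Lemma sum_rot k (e : 'I_d) :
  \sum_(S : {set 'I_d} | (#|S| == k) && (e \in S)) W S =
  \sum_(S : {set 'I_d} | (#|S| == k) && (ord_max \in S)) W S.
Proof.
have hr : e.+1 <= d by exact: ltn_ord.
rewrite (reindex (fun T : {set 'I_d} => rot e.+1 @: T)) /=; last first.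
  apply: onW_bij; exists (fun T : {set 'I_d} => rot (d - e.+1) @: T) => T.
    by rewrite -imset_comp (eq_imset _ (rotK hr)) imset_id.
  by rewrite -imset_comp (eq_imset _ (rotK' hr)) imset_id.
have he : rot e.+1 ord_max = e.
  apply: val_inj => /=; rewrite (_ : n + e.+1 = e + d); last lia.
  by rewrite modnDr modn_small.
apply: eq_big => T; last by move=> _; exact: W_rot.
have -> : (e \in [set rot e.+1 x | x in T]) = (ord_max \in T).
  by rewrite -[X in X \in _]he mem_imset //; exact: rot_inj hr.
by rewrite card_imset //; exact: rot_inj hr.
Qed.

Lemma lw_lastF m c : ~~ last true m -> lw c m = 0.
Proof.
elim: m c => [//|b m IH] c.
case: m IH => [|b' m'] IH.
  by case: b.
move=> h; have h' : ~~ last true (b' :: m') by exact: h.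
case: b h => _.
  have -> : lw c (true :: b' :: m') = f c.+1 * lw 0 (b' :: m') by [].
  by rewrite IH ?muln0.
have -> : lw c (false :: b' :: m') = lw c.+1 (b' :: m') by [].
by rewrite IH.
Qed.

Lemma last_bitsS x0 (S : {set 'I_d}) : last x0 (bitsS S) = (ord_max \in S).
Proof.
rewrite -nth_last size_bitsS /= (set_nth_default false); last by rewrite size_bitsS.
by rewrite (nth_bitsS S ord_max).
Qed.

Lemma W_lw (S : {set 'I_d}) : ord_max \in S -> W S = lw 0 (bitsS S).
Proof.
move=> h; apply: w_lw; by rewrite last_bitsS.
Qed.

Lemma main k : k * \sum_(S : {set 'I_d} | #|S| == k) W S = d * G d k 0.
Proof.
rewrite big_distrr /=.
rewrite (eq_bigr (fun S : {set 'I_d} => \sum_(e in S) W S)); last first.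
  by move=> S /eqP hS; rewrite sum_nat_const hS.
rewrite (exchange_big_dep xpredT) //=.
rewrite (eq_bigr (fun _ => \sum_(S : {set 'I_d} | (#|S| == k) && (ord_max \in S)) W S));
  last by move=> e _; exact: sum_rot.
rewrite sum_nat_const card_ord; congr (_ * _).
rewrite -sum_setsG big_mkcondr /=.
apply: eq_bigr => S _; case: ifP => h; first exact: W_lw.
by rewrite lw_lastF // last_bitsS h.
Qed.
End Rot.

Theorem lemma3p4 (d k : nat) (hk : 0 < k) (hkd : k <= d) :
  \sum_(S : {set 'I_d} | #|S| == k)
     \prod_(P in cyc_parts S) catalan (#|P|.-1)
  = 'C((d.*2 - k).-1, d.-1).
Proof.
case: d hkd => [|n] hkd; first lia.
apply/eqP; rewrite -(eqn_pmul2l hk).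
have := main n k; rewrite /W => ->.
by rewrite GQ Q_mul.
Qed.
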